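(* Let $G$ be a finite group, $\mathcal H=(E,p,B,\tau)$ a $G$-Hilbert bundle and $\Gamma=\{\gamma_{b',b}\}_{b,b'\in B}$ a $G$-equivariant connection on $\mathcal H$ with multiplier $\mu_\Gamma$. Fix $b\in B$ and put $V_b=E_b$ (as a Hilbert space) and, for $g\in G$ and $v\in V_b$, $$\rho^b_g(v)=\gamma_{b,\tau^B_g(b)}\big(\tau^E_g(v)\big).$$ Then each $\rho^b_g$ is a unitary operator on $V_b$ and $(V_b,\rho^b)$ is a projective unitary representation of $G$ satisfying $\rho^b_g\rho^b_h=c(g,h)\,\rho^b_{gh}$ for all $g,h\in G$, with 2-cocycle $$c(g,h)=\mu_\Gamma(b,\ g.b,\ gh.b)\qquad(g,h\in G).$$ In particular, if $\Gamma$ is flat, then $\rho^b$ is a true (linear) representation of $G$.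
   Context: A $G$-Hilbert bundle $\mathcal H=(E,p,B,\tau)$ consists of finite sets $E$ (total space) and $B$ (base), a surjection $p:E\to B$, and actions $\tau=(\tau^E,\tau^B)$ of the finite group $G$ on $E$ and on $B$ with $p\circ\tau^E_g=\tau^B_g\circ p$ for all $g\in G$; each fiber $E_b=p^{-1}(b)$ is a finite-dimensional complex Hilbert space with inner product $\langle\ ,\ \rangle$, and each $\tau^E_g$ restricts to a unitary linear map $E_b\to E_{g.b}$. One writes $g.v=\tau^E_g(v)$, $g.b=\tau^B_g(b)$. A $G$-equivariant connection on $\mathcal H$ is a family $\Gamma=\{\gamma_{b',b}:E_b\to E_{b'}\}_{b,b'\in B}$ of linear isomorphisms such that for all $b,b',b''\in B$, $g\in G$: (i) $\langle\gamma_{b',b}f,\gamma_{b',b}h\rangle=\langle f,h\rangle$ for $f,h\in E_b$; (ii) $\langle\gamma_{b',b}f,h\rangle=\langle f,\gamma_{b,b'}h\rangle$ for $f\in E_b$, $h\in E_{b'}$; (iii) $\gamma_{b,b'}\circ\gamma_{b',b}=\gamma_{b,b}=\mathrm{id}_{E_b}$; (iv) $\gamma_{b'',b'}\circ\gamma_{b',b}=\mu_\Gamma(b'',b',b)\,\gamma_{b'',b}$ for a function $\mu_\Gamma:B\times B\times B\to\mathbb C^\times$ (the multiplier of $\Gamma$); (v) $\tau_g\circ\gamma_{b',b}=\gamma_{g.b',g.b}\circ\tau_g$. The connection is flat if $\mu_\Gamma\equiv1$. *)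

(* Defs.v *)
From HB Require Import structures.
From mathcomp Require Import all_boot all_order all_algebra all_fingroup.
Set Implicit Arguments. Unset Strict Implicit. Unset Printing Implicit Defensive.
Import Order.TTheory GRing.Theory Num.Theory.
Local Open Scope ring_scope.

(* Scalars: C : numClosedFieldType (a numeric algebraically closed field with
   complex conjugation x^*; e.g. algC).  The fiber E_b over b : B is modelled
   as the Hilbert space C^(n b) of column vectors 'cV[C]_(n b) with the
   standard inner product.  A linear map E_b -> E_b' is a matrix
   'M[C]_(n b', n b) acting on the left of column vectors. *)

Definition ip (C : numClosedFieldType) (m : nat) (u v : 'cV[C]_m) : C :=
  \sum_(i < m) u i 0 * (v i 0)^*.

Definition unitary_map (C : numClosedFieldType) (k m : nat) (T : 'M[C]_(k, m)) : Prop :=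
  (forall u v : 'cV[C]_m, ip (T *m u) (T *m v) = ip u v) /\
  (exists S : 'M[C]_(m, k), S *m T = 1%:M /\ T *m S = 1%:M).

Definition lin_iso (C : numClosedFieldType) (k m : nat) (T : 'M[C]_(k, m)) : Prop :=
  exists S : 'M[C]_(m, k), S *m T = 1%:M /\ T *m S = 1%:M.

Definition is_GHilbert_bundle (C : numClosedFieldType) (gT : finGroupType)
    (B : finType) (n : B -> nat) (tauB : gT -> B -> B)
    (tauE : forall (g : gT) (b : B), 'M[C]_(n (tauB g b), n b)) : Prop :=
  ((forall b, tauB 1%g b = b) /\
      (forall g h b, tauB (g * h)%g b = tauB g (tauB h b)) /\
      (forall b (e : tauB 1%g b = b),
          castmx (congr1 n e, erefl (n b)) (tauE 1%g b) = 1%:M) /\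
      (forall g h b (e : tauB g (tauB h b) = tauB (g * h)%g b),
          castmx (congr1 n e, erefl (n b)) (tauE g (tauB h b) *m tauE h b)
          = tauE (g * h)%g b)
    /\ (forall g b, unitary_map (tauE g b))).

Definition is_equiv_connection (C : numClosedFieldType) (gT : finGroupType)
    (B : finType) (n : B -> nat) (tauB : gT -> B -> B)
    (tauE : forall (g : gT) (b : B), 'M[C]_(n (tauB g b), n b))
    (gam : forall b' b : B, 'M[C]_(n b', n b)) (mu : B -> B -> B -> C) : Prop :=
  ((forall b' b, lin_iso (gam b' b)) /\
      (forall b' b (f h : 'cV[C]_(n b)),
          ip (gam b' b *m f) (gam b' b *m h) = ip f h) /\
      (forall b' b (f : 'cV[C]_(n b)) (h : 'cV[C]_(n b')),
          ip (gam b' b *m f) h = ip f (gam b b' *m h)) /\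
      (forall b' b, gam b b' *m gam b' b = 1%:M /\ gam b b = 1%:M) /\
      (forall b'' b' b, gam b'' b' *m gam b' b = mu b'' b' b *: gam b'' b
                        /\ mu b'' b' b != 0)
    /\ (forall g b' b, tauE g b' *m gam b' b = gam (tauB g b') (tauB g b) *m tauE g b)).

Definition flat_connection (C : numClosedFieldType) (B : finType)
    (mu : B -> B -> B -> C) : Prop :=
  forall b'' b' b, mu b'' b' b = 1.

Definition rho (C : numClosedFieldType) (gT : finGroupType)
    (B : finType) (n : B -> nat) (tauB : gT -> B -> B)
    (tauE : forall (g : gT) (b : B), 'M[C]_(n (tauB g b), n b))
    (gam : forall b' b : B, 'M[C]_(n b', n b)) (b : B) (g : gT) : 'M[C]_(n b) :=
  gam b (tauB g b) *m tauE g b.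

(* Main.v *)
Require Import Defs.
From HB Require Import structures.
From mathcomp Require Import all_boot all_order all_algebra all_fingroup.
Import Order.TTheory GRing.Theory Num.Theory.
Local Open Scope ring_scope.

Lemma gam_cast (C : numClosedFieldType) (B : finType) (n : B -> nat)
  (gam : forall b' b : B, 'M[C]_(n b', n b)) (b0 x y : B) (e : x = y) (k : nat)
  (M : 'M[C]_(n x, k)) :
  gam b0 x *m M = gam b0 y *m castmx (congr1 n e, erefl k) M.
Proof. by case: y / e; rewrite castmx_id. Qed.

Theorem mainTheorem1 (C : numClosedFieldType) (gT : finGroupType)
    (B : finType) (n : B -> nat) (tauB : gT -> B -> B)
    (tauE : forall (g : gT) (b : B), 'M[C]_(n (tauB g b), n b))
    (gam : forall b' b : B, 'M[C]_(n b', n b)) (mu : B -> B -> B -> C)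
    (HH : is_GHilbert_bundle tauE)
    (HG : is_equiv_connection tauE gam mu)
    (b : B) :
  let c := fun g h : gT => mu b (tauB g b) (tauB (g * h)%g b) in
  ((forall g, unitary_map (rho tauE gam b g)) /\
      rho tauE gam b 1%g = 1%:M /\
      (forall g h, rho tauE gam b g *m rho tauE gam b h
                   = c g h *: rho tauE gam b (g * h)%g) /\
      (forall g h, c g h != 0) /\
      ((0 < n b)%N -> forall g h k, c g h * c (g * h)%g k = c h k * c g (h * k)%g)
    /\ (flat_connection mu ->
        forall g h, rho tauE gam b g *m rho tauE gam b h = rho tauE gam b (g * h)%g)).
Proof.
move=> c.
case: HH => [act1 [actM [tau1 [tauM tauU]]]].
case: HG => [giso [gip [gadj [ginv [gmu geq]]]]].
have unit : forall g, unitary_map (rho tauE gam b g).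
  move=> g; rewrite /rho; split.
    by move=> u v; rewrite -!mulmxA gip (proj1 (tauU g b)).
  case: (proj2 (tauU g b)) => S [HS1 HS2].
  exists (S *m gam (tauB g b) b); split.
    by rewrite -mulmxA (mulmxA (gam _ b)) (proj1 (ginv _ _)) mul1mx.
  by rewrite -mulmxA (mulmxA (tauE g b)) HS2 mul1mx (proj1 (ginv _ _)).
have mulr : forall g h, rho tauE gam b g *m rho tauE gam b h
                   = c g h *: rho tauE gam b (g * h)%g.
  move=> g h; rewrite /rho /c.
  rewrite -mulmxA (mulmxA (tauE g b)) geq !mulmxA (proj1 (gmu _ _ _)).
  rewrite -scalemxAl -scalemxAl -!mulmxA.
  rewrite (@gam_cast _ _ _ gam b _ _ (esym (actM g h b)) _ _) (tauM g h b (esym (actM g h b))).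
  by rewrite -actM.
split=> //; split.
  rewrite /rho (@gam_cast _ _ _ gam b _ _ (act1 b) _ _) tau1 mulmx1.
  exact: (proj2 (ginv b b)).
split=> //; split.
  by move=> g h; rewrite /c (proj2 (gmu _ _ _)).
split.
  move=> nb g h k.
  have E1 := mulr g h; have E2 := mulr h k.
  have := mulmxA (rho tauE gam b g) (rho tauE gam b h) (rho tauE gam b k).
  rewrite E1 E2 -scalemxAl -scalemxAr !mulr mulgA !scalerA.
  case: (unit ((g * h) * k)%g) => _ [S [HS _]].
  move=> /(congr1 (mulmx S)); rewrite -!scalemxAr HS.
  move=> /matrixP /(_ (Ordinal nb) (Ordinal nb)); rewrite !mxE eqxx /=.
  by rewrite !mulr1n !mulr1 => ->; rewrite mulrC.
move=> fl g h; rewrite mulr /c fl; exact: scale1r.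
Qed.
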